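(* For any simple undirected graph $G$, $$n_G(\mathcal{L}_5)=\frac12\sum_{st\in E}\big(g_1(s,t)+g_1(t,s)\big),\qquad g_1(s,t)=\sum_{u\in\Gamma(s)\setminus\{t\}}\Big((k_t-1-a_{ut})(k_u-1-a_{ut})+1-|c(t,u)|\Big).$$
   Context: $a_{ij}$ adjacency entries, $k_x$ degree, $\Gamma(x)$ neighbourhood, $c(t,u)=\Gamma(t)\cap\Gamma(u)$. $\mathcal{L}_5$ is the path on 5 vertices; $n_G(F)$ counts (not necessarily induced) subgraphs isomorphic to $F$. *)

(* Defs.v *)
(* A simple graph on vertex set 'I_n is a symmetric,
   irreflexive boolean relation e. *)
From HB Require Import structures.
From mathcomp Require Import all_boot all_order all_algebra.
Set Implicit Arguments. Unset Strict Implicit. Unset Printing Implicit Defensive.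
Import Order.TTheory GRing.Theory Num.Theory.

Section Graph.
Variable n : nat.
Variable e : rel 'I_n.

Definition edges : {set {set 'I_n}} :=
  [set A : {set 'I_n} | [exists x, exists y, e x y && (A == [set x; y])]].

Definition adj (x y : 'I_n) : nat := e x y.
Definition deg (x : 'I_n) : nat := #|[set y | e x y]|.
Definition common (t u : 'I_n) : {set 'I_n} := [set y | e t y && e u y].

Definition path5_edges (f : {ffun 'I_5 -> 'I_n}) : {set {set 'I_n}} :=
  [set [set f (inord i); f (inord i.+1)] | i : 'I_4].

(* n_G(L_5): number of (not necessarily induced) subgraphs of G isomorphic
   to the path on 5 vertices.  Since L_5 has no isolated vertices such a
   subgraph is determined by its edge set, which must be the edge set of
   an injectively embedded path on 5 vertices. *)
Definition nP5 : nat :=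
  #|[set S : {set {set 'I_n}} | (S \subset edges) &&
       [exists f : {ffun 'I_5 -> 'I_n}, injectiveb f && (S == path5_edges f)]]|.

Local Open Scope ring_scope.

Definition g1 (s t : 'I_n) : int :=
  \sum_(u : 'I_n | e s u && (u != t))
     (((deg t)%:Z - 1 - (adj u t)%:Z) * ((deg u)%:Z - 1 - (adj u t)%:Z)
      + 1 - (#|common t u|)%:Z).

End Graph.

(* Main.v *)
Require Import Defs.
From HB Require Import structures.
From mathcomp Require Import all_boot all_order all_algebra zify ring.
Set Implicit Arguments. Unset Strict Implicit. Unset Printing Implicit Defensive.
Import Order.TTheory GRing.Theory Num.Theory.

Definition Cn (l : seq nat) := uniq l && all (fun i => has (fun j => (nth 0 l i \in [:: j; j.+1]) && (nth 0 l i.+1 \in [:: j; j.+1])) (iota 0 4)) (iota 0 4).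
Definition Bfin := all (fun a => all (fun b => all (fun c => all (fun d => all (fun x => let l := [:: a;b;c;d;x] in Cn l ==> (l == [:: 0;1;2;3;4]) || (l == [:: 4;3;2;1;0])) (iota 0 5)) (iota 0 5)) (iota 0 5)) (iota 0 5)) (iota 0 5).
Lemma Bfin_true : Bfin.
Proof. vm_cast_no_check (erefl true). Qed.

Lemma fin_perm (l : seq nat) : size l = 5 -> all (fun v => v < 5) l -> Cn l ->
  (l = [:: 0;1;2;3;4]) \/ (l = [:: 4;3;2;1;0]).
Proof.
case: l => [|a [|b [|c [|d [|x [|? ?]]]]]] //= _.
rewrite !andbT => /and5P [ha hb hc hd hx] C.
have B := Bfin_true.
move/allP: B => /(_ a); rewrite mem_iota ha => /(_ isT).
move/allP => /(_ b); rewrite mem_iota hb => /(_ isT).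
move/allP => /(_ c); rewrite mem_iota hc => /(_ isT).
move/allP => /(_ d); rewrite mem_iota hd => /(_ isT).
move/allP => /(_ x); rewrite mem_iota hx => /(_ isT).
by rewrite /= C /= => /orP [/eqP -> | /eqP ->]; [left|right].
Qed.

Lemma ord5_cases (k : 'I_5) : k = inord 0 \/ k = inord 1 \/ k = inord 2 \/ k = inord 3 \/ k = inord 4.
Proof.
case: k => [[|[|[|[|[|m]]]]] H].
- by left; apply: val_inj; rewrite /= inordK.
- by right; left; apply: val_inj; rewrite /= inordK.
- by right; right; left; apply: val_inj; rewrite /= inordK.
- by right; right; right; left; apply: val_inj; rewrite /= inordK.
- by right; right; right; right; apply: val_inj; rewrite /= inordK.
- by [].
Qed.

Lemma enum5 : enum 'I_5 = [:: inord 0; inord 1; inord 2; inord 3; inord 4].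
Proof. by apply: (inj_map val_inj); rewrite val_enum_ord /= !inordK. Qed.

Section Main.
Variable n : nat.
Variable e : rel 'I_n.
Hypothesis e_sym : symmetric e.
Hypothesis e_irr : irreflexive e.
Local Notation T := 'I_n.

Lemma e_neq x y : e x y -> x != y.
Proof. by apply: contraTneq => ->; rewrite e_irr. Qed.

Lemma inj_uniq (f : {ffun 'I_5 -> T}) :
  injectiveb f = uniq [:: f (inord 0); f (inord 1); f (inord 2); f (inord 3); f (inord 4)].
Proof. by rewrite /injectiveb /dinjectiveb enum5. Qed.

Definition frev (f : {ffun 'I_5 -> T}) : {ffun 'I_5 -> T} := [ffun k => f (rev_ord k)].

Definition W : {set {ffun 'I_5 -> T}} :=
  [set f : {ffun 'I_5 -> T} | injectiveb f && [forall i : 'I_4, e (f (inord i)) (f (inord i.+1))]].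

Lemma inord_neq (i : 'I_4) : (inord i : 'I_5) != inord i.+1.
Proof.
have h := ltn_ord i.
apply/eqP => /(congr1 val); rewrite /= !inordK; lia.
Qed.

Lemma rev_inord1 (i : 'I_4) : rev_ord (inord i : 'I_5) = inord (rev_ord i).+1.
Proof.
have h := ltn_ord i.
apply: val_inj; rewrite /= !inordK; lia.
Qed.

Lemma rev_inord2 (i : 'I_4) : rev_ord (inord i.+1 : 'I_5) = inord (rev_ord i).
Proof.
have h := ltn_ord i.
apply: val_inj; rewrite /= !inordK; lia.
Qed.

Lemma frev_edges (f : {ffun 'I_5 -> T}) : path5_edges (frev f) = path5_edges f.
Proof.
apply/setP => A; apply/imsetP/imsetP => -[i _ ->].
- exists (rev_ord i) => //; rewrite !ffunE rev_inord1 rev_inord2 setUC.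
  done.
- exists (rev_ord i) => //; rewrite !ffunE rev_inord1 rev_inord2 rev_ordK setUC.
  done.
Qed.

Lemma frevW (f : {ffun 'I_5 -> T}) : f \in W -> frev f \in W.
Proof.
rewrite !inE => /andP [/injectiveP fi /forallP fe]; apply/andP; split.
  apply/injectiveP => a b; rewrite !ffunE => /fi; exact: rev_ord_inj.
apply/forallP => i; rewrite !ffunE rev_inord1 rev_inord2 e_sym.
exact: fe.
Qed.

Lemma mem_pair (a b c d : T) : [set a; b] = [set c; d] -> (a == c) || (a == d).
Proof. move=> E; have : a \in [set c; d] by rewrite -E set21. by rewrite in_set2. Qed.

Lemma core (f g : {ffun 'I_5 -> T}) : injective f -> injective g ->
  path5_edges g \subset path5_edges f -> g = f \/ g = frev f.
Proof.
move=> fi gi sub.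
have edge_g : forall i : 'I_4, exists j : 'I_4,
    [set g (inord i); g (inord i.+1)] = [set f (inord j); f (inord j.+1)].
  move=> i; have : [set g (inord i); g (inord i.+1)] \in path5_edges f.
    by apply: (subsetP sub); apply: imset_f.
  by case/imsetP => j _ ->; exists j.
have inf : forall (k : 'I_5) (i : 'I_4), (k == inord i) || (k == inord i.+1) ->
    exists j : 'I_4, (g k == f (inord j)) || (g k == f (inord j.+1)).
  move=> k i /orP [/eqP -> | /eqP ->]; have [j E] := edge_g i; exists j.
    exact: mem_pair E.
  by apply: (@mem_pair _ (g (inord i))); rewrite setUC E.
have img : forall k : 'I_5, exists j : 'I_5, f j == g k.
  move=> k.
  have [i Hi] : exists i : 'I_4, (k == inord i) || (k == inord i.+1).
    case: (ord5_cases k) => [->|[->|[->|[->|->]]]].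
    - by exists (inord 0); rewrite inordK ?eqxx.
    - by exists (inord 1); rewrite inordK ?eqxx.
    - by exists (inord 2); rewrite inordK ?eqxx.
    - by exists (inord 3); rewrite inordK ?eqxx.
    - by exists (inord 3); rewrite inordK ?eqxx ?orbT.
  have [j /orP [/eqP E | /eqP E]] := inf k i Hi.
    by exists (inord j); rewrite E.
  by exists (inord j.+1); rewrite E.
pose s (k : 'I_5) := odflt k [pick j | f j == g k].
have fs : forall k, f (s k) = g k.
  move=> k; rewrite /s; case: pickP => [j /eqP //|H].
  by have [j Hj] := img k; rewrite H in Hj.
have si : injective s.
  by move=> a b H; apply: gi; rewrite -!fs H.
have sval : forall (k : 'I_5) (j : 'I_4), (g k == f (inord j)) || (g k == f (inord j.+1)) ->
    val (s k) \in [:: val j; (val j).+1].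
  move=> k j; have h := ltn_ord j; rewrite -!fs !inE => /orP [/eqP/fi -> | /eqP/fi ->];
    rewrite /= inordK ?eqxx ?orbT //; lia.
pose l := map (fun k => val (s (inord k))) (iota 0 5).
have Hl : size l = 5 by rewrite size_map size_iota.
have nthl : forall k, k < 5 -> nth 0 l k = val (s (inord k)).
  by move=> k hk; rewrite (nth_map 0) ?size_iota // nth_iota.
have : Cn l.
  apply/andP; split.
    rewrite map_inj_in_uniq ?iota_uniq // => a b; rewrite !mem_iota /= => ha hb.
    move/val_inj/si/(congr1 val); rewrite /= !inordK //.
  apply/allP => i; rewrite mem_iota add0n => /andP [_ hi].
  change (has (fun j => (nth 0 l i \in [:: j; j.+1]) && (nth 0 l i.+1 \in [:: j; j.+1])) (iota 0 4)).
  have [j Ej] := edge_g (Ordinal hi).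
  apply/hasP; exists (val j); first by rewrite mem_iota /=.
  rewrite !nthl; try lia.
  apply/andP; split; apply: sval; rewrite /=.
    exact: (mem_pair Ej).
  exact: (@mem_pair _ (g (inord i)) _ _ (etrans (setUC _ _) Ej)).
have Hall : all (fun v => v < 5) l.
  by apply/allP => v; rewrite /l => /mapP [k _ ->]; exact: ltn_ord.
move=> /(fin_perm Hl Hall) [Hl2|Hl2]; [left|right]; apply/ffunP => k; rewrite -fs ?ffunE; congr (f _);
  apply: val_inj; have := nthl k (ltn_ord k); rewrite inord_val Hl2 => <-;
  case: k => [[|[|[|[|[|m]]]]] H].
all: try done.
all: exfalso; lia.
Qed.

Lemma Snp_eq : [set S : {set {set T}} | (S \subset edges e) &&
   [exists f : {ffun 'I_5 -> T}, injectiveb f && (S == path5_edges f)]] = (@path5_edges n) @: W.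
Proof.
apply/setP => S; rewrite inE; apply/andP/imsetP.
- move=> [sub /existsP [f /andP [fi /eqP SE]]]; subst S; exists f => //.
  rewrite inE fi /=; apply/forallP => i.
  have : [set f (inord i); f (inord i.+1)] \in edges e.
    by apply: (subsetP sub); apply: imset_f.
  rewrite inE => /existsP [x /existsP [y /andP [exy /eqP E]]].
  have h1 : f (inord i) \in [set x; y] by rewrite -E set21.
  have h2 : f (inord i.+1) \in [set x; y] by rewrite -E set22.
  have h3 : f (inord i) != f (inord i.+1).
    by rewrite (inj_eq (injectiveP _ fi)) inord_neq.
  move: h1 h2 h3; rewrite !in_set2.
  move=> /orP [/eqP -> | /eqP ->] /orP [/eqP -> | /eqP ->]; rewrite ?eqxx //.
  by rewrite e_sym.
- move=> [f fW ->]; move: (fW); rewrite inE => /andP [fi fe]; split.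
    apply/subsetP => A /imsetP [i _ ->]; rewrite inE.
    apply/existsP; exists (f (inord i)); apply/existsP; exists (f (inord i.+1)).
    by rewrite (forallP fe i) eqxx.
  by apply/existsP; exists f; rewrite fi eqxx.
Qed.

Lemma fiber (f : {ffun 'I_5 -> T}) : f \in W ->
  [set g in W | path5_edges g == path5_edges f] = [set f; frev f].
Proof.
move=> fW; apply/setP => g; rewrite !inE; apply/idP/idP.
- move=> /andP [gW /eqP E].
  move: (fW) (gW); rewrite !inE => /andP [/injectiveP fi _] /andP [/injectiveP gi _].
  have sub : path5_edges g \subset path5_edges f by rewrite E subxx.
  by case: (core fi gi sub) => ->; rewrite eqxx ?orbT.
- move=> /orP [/eqP -> | /eqP ->].
    by move: (fW); rewrite inE => ->; rewrite eqxx.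
  by move: (frevW fW); rewrite inE => ->; rewrite frev_edges eqxx.
Qed.

Lemma cardW : #|W| = 2 * nP5 e.
Proof.
rewrite /nP5 Snp_eq -sum1_card (partition_big_imset (@path5_edges n)) /=.
rewrite mulnC -sum_nat_const; apply: eq_bigr => S /imsetP [f fW ->].
have -> : \sum_(g in W | path5_edges g == path5_edges f) 1 =
   #|[set g in W | path5_edges g == path5_edges f]|.
  by rewrite -sum1_card; apply: eq_bigl => g; rewrite inE.
rewrite fiber // cards2.
suff -> : f != frev f by [].
move: (fW); rewrite inE => /andP [/injectiveP fi _].
apply/eqP => /ffunP /(_ (inord 0)); rewrite ffunE => /fi /(congr1 val).
by rewrite /= inordK.
Qed.

Definition Aset (t s u : T) : {set T} := [set x | e t x] :\ s :\ u.
Definition cnt (s t u : T) : nat :=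
  \sum_x \sum_y ((x \in Aset t s u) && (y \in Aset u s t :\ x) : nat).
Definition Pq (q : T * (T * (T * (T * T)))) : bool :=
  let: (s, (t, (u, (x, y)))) := q in uniq [:: x; t; s; u; y] && [&& e x t, e t s, e s u & e u y].
Definition pi5 (f : {ffun 'I_5 -> T}) : T * (T * (T * (T * T))) :=
  (f (inord 2), (f (inord 1), (f (inord 3), (f (inord 0), f (inord 4))))).

Lemma Pform s t u x y : Pq (s, (t, (u, (x, y)))) =
  (e s t && (e s u && (u != t))) && ((x \in Aset t s u) && (y \in Aset u s t :\ x)).
Proof.
rewrite /Pq /Aset; apply/idP/idP.
- move=> /andP [U /and4P [ext ets esu euy]].
  move: U; rewrite /= !inE !negb_or !andbT.
  move=> /and4P [/and4P [xt xs xu xy] /and3P [ts tu ty] /andP [su sy] uy].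
  rewrite (e_sym s t) ets esu (e_sym t x) ext euy xu xs (eq_sym u t) tu.
  by rewrite (eq_sym y x) xy (eq_sym y t) ty (eq_sym y s) sy.
- move=> /andP [/and3P [est esu ut] /andP [hx hy]]; move: hx hy.
  rewrite !inE => /and3P [xu xs etx] /and4P [yx yt ys euy].
  rewrite /= !inE !negb_or !andbT.
  have := e_neq etx; have := e_neq est; have := e_neq esu; have := e_neq euy.
  move=> uy su st tx.
  rewrite (eq_sym x t) tx xs xu (eq_sym x y) yx (eq_sym t s) st (eq_sym t u) ut.
  rewrite (eq_sym t y) yt su (eq_sym s y) ys uy /=.
  by rewrite (e_sym x t) etx (e_sym t s) est esu euy.
Qed.

Lemma W_Pq (f : {ffun 'I_5 -> T}) : (f \in W) = Pq (pi5 f).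
Proof.
rewrite inE inj_uniq /Pq /pi5; congr (_ && _).
apply/forallP/and4P => [H|[h0 h1 h2 h3] i].
- split.
  + by have := H (inord 0); rewrite inordK.
  + by have := H (inord 1); rewrite inordK.
  + by have := H (inord 2); rewrite inordK.
  + by have := H (inord 3); rewrite inordK.
- by case: i => [[|[|[|[|m]]]] Hi].
Qed.

Lemma pi5_inj : injective pi5.
Proof.
move=> f g [h2 h1 h3 h0 h4]; apply/ffunP => k.
by case: (ord5_cases k) => [->|[->|[->|[->|->]]]].
Qed.

Lemma pi5_img : pi5 @: W = [set q | Pq q].
Proof.
apply/setP => q; rewrite inE; apply/imsetP/idP.
- by move=> [f fW ->]; rewrite -W_Pq.
- case: q => s [t [u [x y]]] Hq.
  pose mk : {ffun 'I_5 -> T} := [ffun k : 'I_5 => nth x [:: x; t; s; u; y] k].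
  have E : pi5 mk = (s, (t, (u, (x, y)))) by rewrite /pi5 !ffunE !inordK.
  by exists mk; rewrite // W_Pq E.
Qed.

Lemma sum_pair (A B : finType) (F : A * B -> nat) :
  \sum_p F p = \sum_a \sum_b F (a, b).
Proof. by rewrite pair_bigA; apply: eq_bigr => -[a b]. Qed.

Lemma cardW_sum : #|W| =
  \sum_s \sum_t \sum_u \sum_x \sum_y (Pq (s, (t, (u, (x, y)))) : nat).
Proof.
rewrite -(card_imset _ pi5_inj) pi5_img -sum1_card big_mkcond /=.
rewrite sum_pair; apply: eq_bigr => s _.
rewrite sum_pair; apply: eq_bigr => t _.
rewrite sum_pair; apply: eq_bigr => u _.
rewrite sum_pair; apply: eq_bigr => x _.
by apply: eq_bigr => y _; rewrite inE.
Qed.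

Lemma sum_cnt : #|W| =
  \sum_s \sum_(t | e s t) \sum_(u | e s u && (u != t)) cnt s t u.
Proof.
rewrite cardW_sum; apply: eq_bigr => s _; rewrite [RHS]big_mkcond; apply: eq_bigr => t _.
case: (boolP (e s t)) => hst.
  rewrite [RHS]big_mkcond; apply: eq_bigr => u _; case: ifP => hu.
    by rewrite /cnt; apply: eq_bigr => x _; apply: eq_bigr => y _; rewrite Pform hst hu.
  by rewrite big1 // => x _; rewrite big1 // => y _; rewrite Pform hst hu.
rewrite big1 // => u _; rewrite big1 // => x _; rewrite big1 // => y _.
by rewrite Pform (negbTE hst).
Qed.

Lemma sum_ind (S : {set T}) : \sum_i ((i \in S) : nat) = #|S|.
Proof. by rewrite -sum1_card [RHS]big_mkcond; apply: eq_bigr => i _; case: (i \in S). Qed.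

Lemma cnt_key s t u : cnt s t u + #|Aset t s u :&: Aset u s t| = #|Aset t s u| * #|Aset u s t|.
Proof.
set A := Aset t s u; set B := Aset u s t.
have h1 : cnt s t u = \sum_x ((x \in A) * #|B :\ x|).
  rewrite /cnt; apply: eq_bigr => x _; case: (x \in A) => /=.
    by rewrite mul1n sum_ind.
  by rewrite mul0n big1.
have h2 : #|A :&: B| = \sum_x ((x \in A) * (x \in B)).
  by rewrite -sum_ind; apply: eq_bigr => x _; rewrite inE mulnb.
rewrite h1 h2 -big_split /= -(sum_ind A) big_distrl /=; apply: eq_bigr => x _.
by rewrite -mulnDr addnC -cardsD1.
Qed.

Local Open Scope ring_scope.

Lemma cnt_eq s t u : e s t -> e s u -> u != t ->
  (cnt s t u)%:Z = ((deg e t)%:Z - 1 - (adj e u t)%:Z) * ((deg e u)%:Z - 1 - (adj e u t)%:Z)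
                   + 1 - (#|common e t u|)%:Z.
Proof.
move=> est esu ut.
have us : u != s by rewrite eq_sym; exact: e_neq esu.
have ts : t != s by rewrite eq_sym; exact: e_neq est.
have dt : deg e t = (1 + adj e u t + #|Aset t s u|)%N.
  rewrite /deg /Aset (cardsD1 s) inE (e_sym t s) est.
  by rewrite (cardsD1 u ([set x | e t x] :\ s)) !inE us (e_sym t u) /adj addnA.
have du : deg e u = (1 + adj e u t + #|Aset u s t|)%N.
  rewrite /deg /Aset (cardsD1 s) inE (e_sym u s) esu.
  by rewrite (cardsD1 t ([set x | e u x] :\ s)) !inE ts /adj addnA.
have dc : #|common e t u| = (1 + #|Aset t s u :&: Aset u s t|)%N.
  rewrite /common (cardsD1 s) inE (e_sym t s) est (e_sym u s) esu /=.
  congr (1 + _)%N; apply: eq_card => x; rewrite /Aset !inE.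
  case: (eqVneq x u) => [->|xu]; first by rewrite e_irr /= ?andbF.
  case: (eqVneq x t) => [->|xt]; first by rewrite e_irr /= ?andbF.
  by case: (x != s); case: (e t x); case: (e u x).
have key := cnt_key s t u.
rewrite dt du dc.
have K : (cnt s t u)%:Z + (#|Aset t s u :&: Aset u s t|)%:Z =
   (#|Aset t s u|)%:Z * (#|Aset u s t|)%:Z by rewrite -PoszD -PoszM key.
rewrite !PoszD.
lia.
Qed.

Lemma PoszS (I : finType) (P : pred I) (F : I -> nat) :
  ((\sum_(i | P i) F i)%N)%:Z = \sum_(i | P i) (F i)%:Z.
Proof. exact: (big_morph Posz PoszD (erefl 0%:Z)). Qed.

Lemma sumg1 : \sum_s \sum_(t | e s t) g1 e s t = (#|W|)%:Z.
Proof.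
rewrite sum_cnt PoszS; apply: eq_bigr => s _; rewrite PoszS; apply: eq_bigr => t hst.
rewrite PoszS /g1; apply: eq_bigr => u /andP [hsu hut].
by rewrite cnt_eq.
Qed.

Lemma sym_sum (F : T -> T -> int) :
  \sum_(s : T) \sum_(t : T | (s < t)%N && e s t) (F s t + F t s) = \sum_s \sum_(t | e s t) F s t.
Proof.
under [RHS]eq_bigr => s _ do rewrite (bigID (fun t : T => (s < t)%N)) /=.
rewrite [LHS](eq_bigr _ (fun s _ => big_split _ _ _ _ _)) /=.
rewrite !big_split /=; congr (_ + _).
  by apply: eq_bigr => s _; apply: eq_bigl => t; rewrite andbC.
under eq_bigr => s _ do rewrite big_mkcond.
rewrite exchange_big; symmetry.
under eq_bigr => s _ do rewrite big_mkcond.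
apply: eq_bigr => a _; apply: eq_bigr => b _.
rewrite (e_sym b a).
by case: (ltngtP a b) => [h|h|/val_inj ->]; rewrite ?e_irr ?andbF ?andbT.
Qed.
End Main.

Local Open Scope ring_scope.

Theorem proposition13 (n : nat) (e : rel 'I_n)
  (e_sym : symmetric e) (e_irr : irreflexive e) :
  ((nP5 e)%:R : rat) =
  (1 / 2) * \sum_(s : 'I_n) \sum_(t : 'I_n | ((s < t)%N && e s t))
              ((g1 e s t + g1 e t s)%:~R : rat).
Proof.
have H : \sum_(s : 'I_n) \sum_(t : 'I_n | ((s < t)%N && e s t)) (g1 e s t + g1 e t s)
   = ((2 * nP5 e)%N)%:Z.
  by rewrite (sym_sum e_sym e_irr) (sumg1 e_sym e_irr) (cardW e_sym).
have H2 : \sum_(s : 'I_n) \sum_(t : 'I_n | ((s < t)%N && e s t))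
              ((g1 e s t + g1 e t s)%:~R : rat) =
   (\sum_(s : 'I_n) \sum_(t : 'I_n | ((s < t)%N && e s t)) (g1 e s t + g1 e t s))%:~R.
  by rewrite mulrz_sumr; apply: eq_bigr => s _; rewrite mulrz_sumr.
rewrite H2 H.
have -> : (((2 * nP5 e)%N%:Z)%:~R : rat) = ((2 * nP5 e)%N%:R : rat) by [].
rewrite natrM.
field.
by [].
Qed.
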